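(* Let $\eta,\varepsilon,\alpha_1,\alpha_2\in\mathbb R$. Let $\phi_h,u_h,v_h,w_h$ be continuously differentiable in $t$ with values in $V_h$ and satisfy, for every $j$ and all $\varphi_1,\dots,\varphi_4\in V_h$, $$\tfrac12\int_{I_j}\partial_tu_h\varphi_1dx-\int_{I_j}w_h\partial_x\varphi_1dx+(\widehat{w_h}\varphi_1^-)_{j+\frac12}-(\widehat{w_h}\varphi_1^+)_{j-\frac12}=0,$$ $$-\tfrac12\int_{I_j}\partial_t\phi_h\varphi_2dx+\varepsilon\Big(\int_{I_j}v_h\partial_x\varphi_2dx-(\widehat{v_h}\varphi_2^-)_{j+\frac12}+(\widehat{v_h}\varphi_2^+)_{j-\frac12}\Big)=\int_{I_j}\big(-w_h+\tfrac\eta2u_h^2\big)\varphi_2dx,$$ $$\varepsilon\Big(-\int_{I_j}u_h\partial_x\varphi_3dx+(\widehat{u_h}\varphi_3^-)_{j+\frac12}-(\widehat{u_h}\varphi_3^+)_{j-\frac12}\Big)=\int_{I_j}v_h\varphi_3dx,$$ $$\int_{I_j}\phi_h\partial_x\varphi_4dx-(\widehat{\phi_h}\varphi_4^-)_{j+\frac12}+(\widehat{\phi_h}\varphi_4^+)_{j-\frac12}=-\int_{I_j}u_h\varphi_4dx,$$ with interface fluxes $\widehat{w_h}=\{w_h\}+\alpha_1[w_h]$, $\widehat{v_h}=\{v_h\}-\alpha_2[v_h]$, $\widehat{u_h}=\{u_h\}+\alpha_2[u_h]$, $\widehat{\phi_h}=\{\phi_h\}-\alpha_1[\phi_h]$.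 Then the discrete energy $$\mathcal E_h=\int_\Omega\Big(\tfrac\eta6u_h^3-\tfrac12v_h^2\Big)dx$$ is constant in time.
   Context: This is a DG discretization of the KdV equation $u_t+\eta uu_x+\varepsilon^2u_{xxx}=0$ in the multi-symplectic form $\frac12u_t+w_x=0$, $-\frac12\phi_t-\varepsilon v_x=-w+\frac\eta2u^2$, $\varepsilon u_x=v$, $-\phi_x=-u$. Mesh and spaces: a one-dimensional domain $\Omega$ is partitioned into cells $I_j=[x_{j-1/2},x_{j+1/2}]$, $j=1,\dots,N$, with periodic boundary conditions (interface indices modulo $N$). For fixed $k\ge0$, $V_h=\{v\in L^2(\Omega): v|_{I_j}\text{ is a polynomial of degree}\le k\ \forall j\}$. For $v\in V_h$, $v^\pm_{j+1/2}$ are its right/left limits at $x_{j+1/2}$, $\{v\}=\frac12(v^++v^-)$, $[v]=v^+-v^-$; subscript $j\pm\frac12$ denotes evaluation at $x_{j\pm1/2}$. *)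

(* Defs.v *)
From HB Require Import structures.
From mathcomp Require Import all_boot all_order all_algebra.
From mathcomp Require Import all_classical all_reals all_analysis.
Set Implicit Arguments. Unset Strict Implicit. Unset Printing Implicit Defensive.
Import Order.TTheory GRing.Theory Num.Theory.
Import numFieldNormedType.Exports.
Local Open Scope classical_set_scope.
Local Open Scope ring_scope.

(* Mesh: nodes xn : nat -> R; cell I_j (j : 'I_N, 0-indexed) is
   [xn j, xn j.+1], i.e. x_{j-1/2} = xn j and x_{j+1/2} = xn j.+1.
   Periodicity: the cell following cell j is ordS j (cyclic successor),
   the preceding one is ord_pred j.

   An element of V_h is a family p : 'I_N -> {poly R} (p j is the
   restriction to I_j) with deg (p j) <= k. *)

Definition inVh (R : realType) (N k : nat) (p : 'I_N -> {poly R}) : Prop :=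
  forall j : 'I_N, (size (p j) <= k.+1)%N.

Definition cellint (R : realType) (xn : nat -> R) (j : nat) (f : R -> R) : R :=
  \int[lebesgue_measure]_(x in `[xn j, xn j.+1]) f x.

(* traces at the interface x_{j+1/2} (right end of cell j) *)
Definition trm (R : realType) (N : nat) (xn : nat -> R)
  (p : 'I_N -> {poly R}) (j : 'I_N) : R := (p j).[xn j.+1].
Definition trp (R : realType) (N : nat) (xn : nat -> R)
  (p : 'I_N -> {poly R}) (j : 'I_N) : R := (p (ordS j)).[xn (ordS j)].

Definition flux (R : realType) (N : nat) (xn : nat -> R) (a : R)
  (p : 'I_N -> {poly R}) (j : 'I_N) : R :=
  (trp xn p j + trm xn p j) / 2 + a * (trp xn p j - trm xn p j).

Definition dt (R : realType) (N : nat) (u : R -> 'I_N -> {poly R})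
  (j : 'I_N) (t x : R) : R :=
  derive1 (fun s => (u s j).[x]) t.

Definition C1Vh (R : realType) (N k : nat) (u : R -> 'I_N -> {poly R}) : Prop :=
  (forall t, inVh k (u t)) /\
  forall (j : 'I_N) (i : nat),
    (forall t, derivable (fun s => (u s j)`_i) t 1) /\
    continuous (fun t => derive1 (fun s => (u s j)`_i) t).

Definition energy (R : realType) (N : nat) (xn : nat -> R) (eta : R)
  (u v : R -> 'I_N -> {poly R}) (t : R) : R :=
  \sum_(j < N) cellint xn j
     (fun x => eta / 6 * (u t j).[x] ^+ 3 - 1 / 2 * (v t j).[x] ^+ 2).

(* Main.v *)
Require Import Defs.
From HB Require Import structures.
From mathcomp Require Import all_boot all_order all_algebra.
From mathcomp Require Import all_classical all_reals all_analysis.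
From mathcomp.algebra_tactics Require Import ring lra.
Import Order.TTheory GRing.Theory Num.Theory.
Import numFieldNormedType.Exports.
Set Implicit Arguments. Unset Strict Implicit. Unset Printing Implicit Defensive.
Local Open Scope ring_scope.

Section Aux.
Variable R : realType.

Lemma isd_val (f : R -> R) (t d : R) : is_derive t (1:R) f d -> 'D_1 f t = d.
Proof. by move=> H; exact: (@derive_val _ _ _ _ _ _ _ H). Qed.

Lemma isd_uniq (f : R -> R) (t d1 d2 : R) :
  is_derive t (1:R) f d1 -> is_derive t (1:R) f d2 -> d1 = d2.
Proof. by move=> H1 H2; rewrite -(isd_val H1) (isd_val H2). Qed.

Lemma isd_ext (f g : R -> R) (t d : R) : (forall s, f s = g s) ->
  is_derive t (1:R) f d -> is_derive t (1:R) g d.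
Proof. by move=> e; rewrite (funext e). Qed.

Lemma isdD (f g : R -> R) (t df dg : R) : is_derive t (1:R) f df -> is_derive t (1:R) g dg ->
  is_derive t (1:R) (fun s => f s + g s) (df + dg).
Proof. by move=> H1 H2; exact: is_deriveD. Qed.

Lemma isdN (f : R -> R) (t df : R) : is_derive t (1:R) f df ->
  is_derive t (1:R) (fun s => - f s) (- df).
Proof. by move=> H1; exact: is_deriveN. Qed.

Lemma isdB (f g : R -> R) (t df dg : R) : is_derive t (1:R) f df -> is_derive t (1:R) g dg ->
  is_derive t (1:R) (fun s => f s - g s) (df - dg).
Proof. by move=> H1 H2; exact: is_deriveB. Qed.

Lemma isdZ (f : R -> R) (c t df : R) : is_derive t (1:R) f df ->
  is_derive t (1:R) (fun s => c * f s) (c * df).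
Proof. by move=> H1; have := is_deriveZ c H1. Qed.

Lemma isdMc (f : R -> R) (c t df : R) : is_derive t (1:R) f df ->
  is_derive t (1:R) (fun s => f s * c) (df * c).
Proof.
move=> H1; apply: (isd_ext (f := fun s => c * f s)); first by move=> s; rewrite mulrC.
by rewrite mulrC; exact: isdZ.
Qed.

Lemma isdM (f g : R -> R) (t df dg : R) : is_derive t (1:R) f df -> is_derive t (1:R) g dg ->
  is_derive t (1:R) (fun s => f s * g s) (df * g t + f t * dg).
Proof.
move=> H1 H2; have := is_deriveM H1 H2.
by rewrite /GRing.scale /= addrC [g t * _]mulrC.
Qed.

Lemma isdC (c t : R) : is_derive t (1:R) (fun _ : R => c) 0.
Proof. exact: is_derive_cst. Qed.

Lemma isd_sum n (h : 'I_n -> R -> R) (dh : 'I_n -> R) (t : R) :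
  (forall i, is_derive t (1:R) (h i) (dh i)) ->
  is_derive t (1:R) (fun s => \sum_(i < n) h i s) (\sum_(i < n) dh i).
Proof.
elim: n h dh => [|n IH] h dh H.
  by apply: (isd_ext (f := fun _ => 0)) => [s|]; rewrite ?big_ord0 //; exact: isdC.
apply: (isd_ext (f := fun s => \sum_(i < n) h (widen_ord (leqnSn n) i) s + h ord_max s)).
  by move=> s; rewrite big_ord_recr.
rewrite big_ord_recr /=; apply: isdD.
  by apply: (IH (fun i => h (widen_ord (leqnSn n) i))) => i; exact: H.
all: exact: H.
Qed.


Definition hasD (P Q : R -> {poly R}) :=
  forall i (t : R), is_derive t (1:R) (fun s => (P s)`_i) ((Q t)`_i).
Definition bnd (P : R -> {poly R}) M := forall s, (size (P s) <= M)%N.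
Definition islin (L : {poly R} -> R) := forall c p q, L (c *: p + q) = c * L p + L q.

Lemma islin0 L : islin L -> L 0 = 0.
Proof.
move=> HL; have := HL (-1) 0 0.
by rewrite scaleN1r oppr0 addr0 mulN1r addNr.
Qed.

Lemma lin_expand L M (p : {poly R}) : islin L -> (size p <= M)%N ->
  L p = \sum_(i < M) p`_i * L 'X^i.
Proof.
move=> HL hs.
transitivity (L (\sum_(i < M) p`_i *: 'X^i)).
  congr L; rewrite -poly_def; apply/polyP => i; rewrite coef_poly.
  case: ltnP => // h; rewrite nth_default //; exact: leq_trans hs h.
elim/big_rec2: _ => [|i y1 y2 _ IH]; first exact: islin0.
by rewrite HL IH.
Qed.

Lemma hasD_bnd P Q M : bnd P M -> hasD P Q -> bnd Q M.
Proof.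
move=> hb hd t; apply/leq_sizeP => j hj.
have h0 : forall s, (P s)`_j = 0.
  by move=> s; rewrite nth_default //; exact: leq_trans (hb s) hj.
apply: (isd_uniq (hd j t)).
apply: (isd_ext (f := fun _ => 0) _ (isdC 0 t)) => s; by rewrite h0.
Qed.

Lemma lin_deriv L M P Q (t : R) : islin L -> bnd P M -> hasD P Q ->
  is_derive t (1:R) (fun s => L (P s)) (L (Q t)).
Proof.
move=> HL hb hd.
rewrite (lin_expand HL (hasD_bnd hb hd t)).
apply: (isd_ext (f := fun s => \sum_(i < M) (fun i s => (P s)`_i * L 'X^i) i s)).
  by move=> s /=; rewrite (lin_expand HL (hb s)).
apply: isd_sum => i; apply: isdMc; exact: hd.
Qed.

Lemma hasD_add P P' Q Q' : hasD P P' -> hasD Q Q' ->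
  hasD (fun s => P s + Q s) (fun t => P' t + Q' t).
Proof.
move=> h1 h2 i t; rewrite coefD.
apply: (isd_ext (f := fun s => (P s)`_i + (Q s)`_i) _ (isdD (h1 i t) (h2 i t))) => s; by rewrite coefD.
Qed.

Lemma hasD_opp P P' : hasD P P' -> hasD (fun s => - P s) (fun t => - P' t).
Proof.
move=> h1 i t; rewrite coefN.
apply: (isd_ext (f := fun s => - (P s)`_i) _ (isdN (h1 i t))) => s; by rewrite coefN.
Qed.

Lemma hasD_C (c : R) : hasD (fun _ => c%:P) (fun _ => 0).
Proof. by move=> i t; rewrite coef0; exact: isdC. Qed.

Lemma hasD_mul P P' Q Q' : hasD P P' -> hasD Q Q' ->
  hasD (fun s => P s * Q s) (fun t => P' t * Q t + P t * Q' t).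
Proof.
move=> h1 h2 i t.
apply: (isd_ext (f := fun s => \sum_(j < i.+1)
   (fun j s => (P s)`_j * (Q s)`_(i - j)) j s)).
  by move=> s; rewrite coefM.
rewrite coefD !coefM -big_split /=.
apply: isd_sum => j; exact: isdM.
Qed.

Lemma bnd_add P Q M1 M2 : bnd P M1 -> bnd Q M2 -> bnd (fun s => P s + Q s) (maxn M1 M2).
Proof.
move=> h1 h2 s; apply: leq_trans (size_polyD _ _) _.
by rewrite geq_max !leq_max h1 h2 orbT.
Qed.

Lemma bnd_opp P M : bnd P M -> bnd (fun s => - P s) M.
Proof. by move=> h s; rewrite size_polyN. Qed.

Lemma bnd_mul P Q M1 M2 : bnd P M1 -> bnd Q M2 -> bnd (fun s => P s * Q s) (M1 + M2).
Proof.
move=> h1 h2 s; apply: leq_trans (size_polyMleq _ _) _.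
apply: leq_trans (leq_pred _) _; exact: leq_add.
Qed.

Lemma bnd_C (c : R) : bnd (fun _ => c%:P) 1.
Proof. by move=> s; exact: size_polyC_leq1. Qed.


Local Open Scope classical_set_scope.
Definition Ic (a b : R) (p : {poly R}) : R :=
  \int[lebesgue_measure]_(x in `[a, b]) p.[x].

Lemma Ic_int (a b : R) (p : {poly R}) :
  lebesgue_measure.-integrable `[a, b] (EFin \o (fun x => p.[x])).
Proof.
apply: continuous_compact_integrable; first exact: segment_compact.
apply: continuous_subspaceT; exact: continuous_horner.
Qed.

Lemma Ic_add a b p q : Ic a b (p + q) = Ic a b p + Ic a b q.
Proof.
rewrite /Ic -(RintegralD _ (Ic_int a b p) (Ic_int a b q)) //.
by apply: eq_Rintegral => x _; rewrite hornerD.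
Qed.

Lemma Ic_scal a b c p : Ic a b (c *: p) = c * Ic a b p.
Proof.
rewrite /Ic -(RintegralZl c _ (Ic_int a b p)) //.
by apply: eq_Rintegral => x _; rewrite hornerZ.
Qed.

Lemma Ic_lin a b : islin (Ic a b).
Proof. by move=> c p q; rewrite Ic_add Ic_scal. Qed.

Lemma Ic_deriv (a b : R) p : a < b -> Ic a b (p^`()) = p.[b] - p.[a].
Proof.
move=> ab; rewrite /Ic /Rintegral.
rewrite (@continuous_FTC2 _ (fun x => (p^`()).[x]) (horner p)) //.
all: try (by rewrite -EFinD).
all: try (by apply: continuous_subspaceT; exact: continuous_horner).
all: try (by move=> x _; rewrite -derivE).
split.
+ by move=> x _; exact: derivable_horner.
+ by apply: cvg_at_right_filter; exact: continuous_horner.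
+ by apply: cvg_at_left_filter; exact: continuous_horner.
Qed.


Definition Id (xn : nat -> R) (j : nat) p := Ic (xn j) (xn j.+1) p.

Lemma cellint_poly xn (j : nat) F p : (forall x, F x = p.[x]) -> cellint xn j F = Id xn j p.
Proof. by move=> H; rewrite /cellint (funext H). Qed.

Lemma cellint_lin2 xn (j : nat) F c1 c2 p q :
  (forall x, F x = c1 * p.[x] + c2 * q.[x]) -> cellint xn j F = c1 * Id xn j p + c2 * Id xn j q.
Proof.
move=> H; rewrite (@cellint_poly _ _ _ (c1 *: p + c2 *: q)).
  by rewrite /Id Ic_add !Ic_scal.
by move=> x; rewrite H hornerD !hornerZ.
Qed.

Lemma Id_ext xn (j : nat) p q : (forall x, p.[x] = q.[x]) -> Id xn j p = Id xn j q.
Proof. by move=> H; rewrite /Id /Ic (funext H). Qed.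

Lemma Id_lin2 xn (j : nat) p c1 c2 q1 q2 :
  (forall x, p.[x] = c1 * q1.[x] + c2 * q2.[x]) -> Id xn j p = c1 * Id xn j q1 + c2 * Id xn j q2.
Proof.
move=> H; rewrite (@Id_ext _ _ _ (c1 *: q1 + c2 *: q2)).
  by rewrite /Id Ic_add !Ic_scal.
by move=> x; rewrite H hornerD !hornerZ.
Qed.

Lemma sum_pred N (F : 'I_N -> R) : \sum_(j < N) F (ord_pred j) = \sum_(j < N) F j.
Proof. by rewrite [RHS](reindex_inj (@ord_pred_inj N)). Qed.

Lemma sum_succ N (F : 'I_N -> R) : \sum_(j < N) F (ordS j) = \sum_(j < N) F j.
Proof. by rewrite [RHS](reindex_inj (@ordS_inj N)). Qed.

Definition Bf N xn a (g h : 'I_N -> {poly R}) (j : 'I_N) :=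
  Id xn j (g j * (h j)^`()) - flux xn a g j * trm xn h j
  + flux xn a g (ord_pred j) * trp xn h (ord_pred j).

Lemma antisym N (xn : nat -> R) (hmesh : forall j : 'I_N, xn j < xn j.+1) a g h :
  \sum_(j < N) Bf xn a g h j + \sum_(j < N) Bf xn (- a) h g j = 0.
Proof.
pose A (j : 'I_N) := trm xn g j * trm xn h j.
pose B (j : 'I_N) := (g j).[xn j] * (h j).[xn j].
pose F1 (j : 'I_N) := flux xn a g j * trm xn h j.
pose G1 (j : 'I_N) := flux xn a g j * trp xn h j.
pose F2 (j : 'I_N) := flux xn (- a) h j * trm xn g j.
pose G2 (j : 'I_N) := flux xn (- a) h j * trp xn g j.
have E1 : forall j, Bf xn a g h j + Bf xn (- a) h g j =
   A j + - B j + - F1 j + G1 (ord_pred j) + - F2 j + G2 (ord_pred j).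
  move=> j; rewrite /Bf.
  have -> : Id xn j (g j * (h j)^`()) = Id xn j ((g j * h j)^`()) - Id xn j (h j * (g j)^`()).
    rewrite derivM /Id Ic_add [h j * _]mulrC; ring.
  rewrite /Id Ic_deriv // !hornerM /A /B /F1 /G1 /F2 /G2 /trm; ring.
rewrite -big_split (eq_bigr _ (fun j _ => E1 j)) !big_split /= !sumrN.
rewrite (sum_pred G1) (sum_pred G2) -(sum_succ B).
rewrite -!sumrN -!big_split /=; apply: big1 => j _.
rewrite /A /B /F1 /G1 /F2 /G2 /flux /trm /trp.
by field.
Qed.


Lemma horner_lin (x : R) : islin (fun p : {poly R} => p.[x]).
Proof. by move=> c p q; rewrite hornerD hornerZ. Qed.

Lemma Idmul_lin xn (j : nat) q : islin (fun p => Id xn j (p * q)).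
Proof. by move=> c p r; rewrite mulrDl -scalerAl /Id Ic_add Ic_scal. Qed.

Lemma flux_deriv N xn a (g gd : R -> 'I_N -> {poly R}) M (j : 'I_N) (t : R) :
  (forall j', bnd (fun s => g s j') M) ->
  (forall j', hasD (fun s => g s j') (fun t => gd t j')) ->
  is_derive t (1:R) (fun s => flux xn a (g s) j) (flux xn a (gd t) j).
Proof.
move=> hb hd.
have hx : forall j' x, is_derive t (1:R) (fun s => (g s j').[x]) ((gd t j').[x]).
  move=> j' x.
  exact: (lin_deriv (L := fun p => p.[x]) (P := fun s => g s j') t (horner_lin x) (hb j') (hd j')).
rewrite /flux /trp /trm.
apply: isdD.
all: try (by apply: isdMc; apply: isdD; exact: hx).
all: try (by apply: isdZ; apply: isdB; exact: hx).
Qed.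

Lemma Bf_deriv N xn a (g gd : R -> 'I_N -> {poly R}) h M (j : 'I_N) (t : R) :
  (forall j', bnd (fun s => g s j') M) ->
  (forall j', hasD (fun s => g s j') (fun t => gd t j')) ->
  is_derive t (1:R) (fun s => Bf xn a (g s) h j) (Bf xn a (gd t) h j).
Proof.
move=> hb hd; rewrite /Bf.
apply: isdD.
all: try (by apply: isdMc; exact: flux_deriv hb hd).
apply: isdB.
all: try (by apply: isdMc; exact: flux_deriv hb hd).
exact: (lin_deriv (L := fun p => Id xn j (p * (h j)^`())) (P := fun s => g s j) t
   (Idmul_lin _ _ _) (hb j) (hd j)).
Qed.

Definition Dr N k (u : R -> 'I_N -> {poly R}) (t : R) (j : 'I_N) : {poly R} :=
  \poly_(i < k.+1) derive1 (fun s => (u s j)`_i) t.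

Lemma C1_bnd N k u (j : 'I_N) : C1Vh k u -> bnd (fun s => u s j) k.+1.
Proof. by case=> h _ s; exact: h s j. Qed.

Lemma C1_hasD N k u (j : 'I_N) : C1Vh k u -> hasD (fun s => u s j) (fun t => Dr k u t j).
Proof.
case=> hs hd i t; rewrite coef_poly; case: ltnP => hi.
  rewrite derive1E; apply: derivableP; exact: ((hd j i).1 t).
apply: (isd_ext (f := fun _ => 0) _ (isdC 0 t)) => s.
by rewrite nth_default //; exact: leq_trans (hs s j) hi.
Qed.

Lemma Dr_inVh N k u (t : R) : inVh k (fun j : 'I_N => Dr k u t j).
Proof. by move=> j; exact: size_poly. Qed.

Lemma dt_eq N k u (j : 'I_N) (t x : R) : C1Vh k u -> dt u j t x = (Dr k u t j).[x].
Proof.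
move=> hC; rewrite /dt derive1E; apply: isd_val.
exact: (lin_deriv (L := fun p => p.[x]) (P := fun s => u s j) t (horner_lin x)
   (C1_bnd j hC) (C1_hasD j hC)).
Qed.

End Aux.

Unset Implicit Arguments.

Theorem proposition4p2 (R : realType) (N k : nat) (xn : nat -> R)
  (hmesh : forall j : 'I_N, xn j < xn j.+1)
  (eta eps a1 a2 : R) (phi u v w : R -> 'I_N -> {poly R})
  (Cphi : C1Vh k phi) (Cu : C1Vh k u) (Cv : C1Vh k v) (Cw : C1Vh k w)
  (eq1 : forall (t : R) (j : 'I_N) (f : 'I_N -> {poly R}), inVh k f ->
     1 / 2 * cellint xn j (fun x => dt u j t x * (f j).[x])
     - cellint xn j (fun x => (w t j).[x] * (f j)^`().[x])
     + flux xn a1 (w t) j * trm xn f j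
     - flux xn a1 (w t) (ord_pred j) * trp xn f (ord_pred j) = 0)
  (eq2 : forall (t : R) (j : 'I_N) (f : 'I_N -> {poly R}), inVh k f ->
     - (1 / 2) * cellint xn j (fun x => dt phi j t x * (f j).[x])
     + eps * (cellint xn j (fun x => (v t j).[x] * (f j)^`().[x])
              - flux xn (- a2) (v t) j * trm xn f j
              + flux xn (- a2) (v t) (ord_pred j) * trp xn f (ord_pred j))
     = cellint xn j (fun x => (- (w t j).[x] + eta / 2 * (u t j).[x] ^+ 2)
                               * (f j).[x]))
  (eq3 : forall (t : R) (j : 'I_N) (f : 'I_N -> {poly R}), inVh k f ->
     eps * (- cellint xn j (fun x => (u t j).[x] * (f j)^`().[x])
            + flux xn a2 (u t) j * trm xn f j
            - flux xn a2 (u t) (ord_pred j) * trp xn f (ord_pred j))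
     = cellint xn j (fun x => (v t j).[x] * (f j).[x]))
  (eq4 : forall (t : R) (j : 'I_N) (f : 'I_N -> {poly R}), inVh k f ->
     cellint xn j (fun x => (phi t j).[x] * (f j)^`().[x])
     - flux xn (- a1) (phi t) j * trm xn f j
     + flux xn (- a1) (phi t) (ord_pred j) * trp xn f (ord_pred j)
     = - cellint xn j (fun x => (u t j).[x] * (f j).[x])) :
  forall t1 t2 : R, energy xn eta u v t1 = energy xn eta u v t2.
Proof.
move=> t1 t2; apply: is_derive_0_is_cst => t.
pose Q s j := (eta / 6)%:P * (u s j * (u s j * u s j)) + (- (1 / 2))%:P * (v s j * v s j).
pose Ud := fun j => Dr k u t j.
pose Vd := fun j => Dr k v t j.
pose Pd := fun j => Dr k phi t j.
pose U := u t. pose V := v t. pose W := w t.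
pose QD (t : R) j := (0 * (u t j * (u t j * u t j)) + (eta / 6)%:P * (Dr k u t j * (u t j * u t j)
    + u t j * (Dr k u t j * u t j + u t j * Dr k u t j)))
    + (0 * (v t j * v t j) + (- (1 / 2))%:P * (Dr k v t j * v t j + v t j * Dr k v t j)).
have hQ : forall j, hasD (fun s => Q s j) (fun t => QD t j).
  move=> j.
  exact: (hasD_add (hasD_mul (hasD_C _) (hasD_mul (C1_hasD j Cu)
    (hasD_mul (C1_hasD j Cu) (C1_hasD j Cu))))
    (hasD_mul (hasD_C _) (hasD_mul (C1_hasD j Cv) (C1_hasD j Cv)))).
have hE : is_derive t (1:R) (energy xn eta u v) (\sum_(j < N) Id xn j (QD t j)).
  apply: (@isd_ext _ (fun s => \sum_(j < N) (fun (j : 'I_N) s => Id xn j (Q s j)) j s) (energy xn eta u v)).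
    move=> s; rewrite /energy; apply: eq_bigr => j _ /=.
    by apply: esym; apply: cellint_poly => x; rewrite /Q !(hornerD, hornerM, hornerC); ring.
  apply: isd_sum => j.
  exact: (lin_deriv (L := Id xn j) (P := fun s => Q s j) t (Ic_lin _ _)
    (bnd_add (bnd_mul (bnd_C _) (bnd_mul (C1_bnd j Cu) (bnd_mul (C1_bnd j Cu) (C1_bnd j Cu))))
             (bnd_mul (bnd_C _) (bnd_mul (C1_bnd j Cv) (C1_bnd j Cv)))) (hQ j)).
apply: (is_derive_eq hE).
have hUd : inVh k Ud := Dr_inVh k u t.
have hPd : inVh k Pd := Dr_inVh k phi t.
have hV : inVh k V := Cv.1 t.
have hW : inVh k W := Cw.1 t.
have e1 : forall j : 'I_N, 1 / 2 * Id xn j (Ud j * Pd j) - Bf xn a1 W Pd j = 0.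
  move=> j; have := eq1 t j Pd hPd.
  have -> : cellint xn j (fun x => dt u j t x * (Pd j).[x]) = Id xn j (Ud j * Pd j).
    by apply: cellint_poly => x; rewrite hornerM (dt_eq j t x Cu).
  have -> : cellint xn j (fun x => (w t j).[x] * (Pd j)^`().[x]) = Id xn j (W j * (Pd j)^`()).
    by apply: cellint_poly => x; rewrite hornerM.
  rewrite /Bf; lra.
have e2 : forall j : 'I_N, - (1 / 2) * Id xn j (Ud j * Pd j) + eps * Bf xn (- a2) V Ud j
    = (-1) * Id xn j (Ud j * W j) + eta / 2 * Id xn j (U j * U j * Ud j).
  move=> j; have := eq2 t j Ud hUd.
  have -> : cellint xn j (fun x => dt phi j t x * (Ud j).[x]) = Id xn j (Ud j * Pd j).
    by apply: cellint_poly => x; rewrite hornerM (dt_eq j t x Cphi) mulrC.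
  have -> : cellint xn j (fun x => (v t j).[x] * (Ud j)^`().[x]) = Id xn j (V j * (Ud j)^`()).
    by apply: cellint_poly => x; rewrite hornerM.
  have -> : cellint xn j (fun x => (- (w t j).[x] + eta / 2 * (u t j).[x] ^+ 2) * (Ud j).[x])
      = (-1) * Id xn j (Ud j * W j) + eta / 2 * Id xn j (U j * U j * Ud j).
    by apply: cellint_lin2 => x; rewrite !hornerM; ring.
  rewrite /Bf; lra.
have e3 : forall j : 'I_N, - eps * Bf xn a2 Ud V j = Id xn j (Vd j * V j).
  move=> j.
  have F3 : forall s, - eps * Bf xn a2 (u s) V j = Id xn j (v s j * V j).
    move=> s; have := eq3 s j V hV.
    have -> : cellint xn j (fun x => (u s j).[x] * (V j)^`().[x]) = Id xn j (u s j * (V j)^`()).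
      by apply: cellint_poly => x; rewrite hornerM.
    have -> : cellint xn j (fun x => (v s j).[x] * (V j).[x]) = Id xn j (v s j * V j).
      by apply: cellint_poly => x; rewrite hornerM.
    rewrite /Bf; lra.
  have D1 := isdZ (- eps) (Bf_deriv xn a2 V j t (fun j' => C1_bnd j' Cu) (fun j' => C1_hasD j' Cu)).
  have D2 := lin_deriv (L := fun p => Id xn j (p * V j)) (P := fun s => v s j) t
    (Idmul_lin _ _ _) (C1_bnd j Cv) (C1_hasD j Cv).
  exact: (isd_uniq (isd_ext F3 D1) D2).
have e4 : forall j : 'I_N, Bf xn (- a1) Pd W j = (-1) * Id xn j (Ud j * W j).
  move=> j.
  have F4 : forall s, Bf xn (- a1) (phi s) W j = (-1) * Id xn j (u s j * W j).
    move=> s; have := eq4 s j W hW.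
    have -> : cellint xn j (fun x => (phi s j).[x] * (W j)^`().[x]) = Id xn j (phi s j * (W j)^`()).
      by apply: cellint_poly => x; rewrite hornerM.
    have -> : cellint xn j (fun x => (u s j).[x] * (W j).[x]) = Id xn j (u s j * W j).
      by apply: cellint_poly => x; rewrite hornerM.
    rewrite /Bf; lra.
  have D1 := Bf_deriv xn (- a1) W j t (fun j' => C1_bnd j' Cphi) (fun j' => C1_hasD j' Cphi).
  have D2 := isdZ (-1) (lin_deriv (L := fun p => Id xn j (p * W j)) (P := fun s => u s j) t
    (Idmul_lin _ _ _) (C1_bnd j Cu) (C1_hasD j Cu)).
  exact: (isd_uniq (isd_ext F4 D1) D2).
have e5 : forall j : 'I_N, Id xn j (QD t j) = eta / 2 * Id xn j (U j * U j * Ud j) + (-1) * Id xn j (Vd j * V j).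
  by move=> j; apply: Id_lin2 => x; rewrite /QD !(hornerD, hornerM, hornerC, horner0, hornerN); field.
have eJ : forall j : 'I_N, Id xn j (QD t j) =
   - (Bf xn (- a1) Pd W j + Bf xn a1 W Pd j) + eps * (Bf xn (- a2) V Ud j + Bf xn a2 Ud V j).
  move=> j; rewrite e5 mulrDr; have h3' : eps * Bf xn a2 Ud V j = - Id xn j (Vd j * V j) by rewrite -(e3 j) mulNr opprK.
  move: (e1 j) (e2 j) h3' (e4 j).
  generalize (Bf xn (- a1) Pd W j) (Bf xn a1 W Pd j) (Bf xn (- a2) V Ud j) (Bf xn a2 Ud V j)
    (Id xn j (Ud j * Pd j)) (Id xn j (Ud j * W j)) (Id xn j (U j * U j * Ud j))
    (Id xn j (Vd j * V j)) => b2 b1 b3 b4 s1 s2 s3 s4.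
  generalize (eps * b3) (eps * b4) (eta / 2 * s3) => m3 m4 m5 h1 h2 h3 h4.
  lra.
have A1 := antisym hmesh (- a1) Pd W. rewrite opprK in A1.
have A2 := antisym hmesh (- a2) V Ud. rewrite opprK in A2.
have A1' : \sum_(j < N) (Bf xn (- a1) Pd W j + Bf xn a1 W Pd j) = 0.
  by rewrite big_split.
have A2' : \sum_(j < N) (Bf xn (- a2) V Ud j + Bf xn a2 Ud V j) = 0.
  by rewrite big_split.
rewrite (eq_bigr _ (fun j _ => eJ j)) big_split /= sumrN -mulr_sumr.
by rewrite A1' A2' oppr0 mulr0 addr0.
Qed.
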